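(* Let $p$ be a prime, $n\ge2$, and $\Gamma$ a profinite group acting trivially on $\mathbb{F}_p$. If every open subgroup of $\Gamma$ satisfies the $n$-fold vanishing Massey product property, then every closed subgroup of $\Gamma$ satisfies the $n$-fold vanishing Massey product property.
   Context: With $U_{n+1}(\mathbb{F}_p)$ the upper unitriangular $(n+1)\times(n+1)$ matrices over $\mathbb{F}_p$ and $\overline{U_{n+1}(\mathbb{F}_p)}$ its quotient by the central subgroup given by the $(1,n+1)$ entry, a profinite group $H$ satisfies the $n$-fold vanishing Massey product property if for every continuous homomorphism $\varphi:H\to\overline{U_{n+1}(\mathbb{F}_p)}$ there is a continuous homomorphism $\psi:H\to U_{n+1}(\mathbb{F}_p)$ whose $(i,i+1)$ entries agree with those of $\varphi$ at every $h\in H$, for $1\le i\le n$. *)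

(* Defs.v *)
From HB Require Import structures.
From mathcomp Require Import all_boot all_order all_algebra.
From mathcomp Require Import all_classical topology.
Set Implicit Arguments.
Unset Strict Implicit.
Unset Printing Implicit Defensive.
Import GRing.Theory.
Local Open Scope classical_set_scope.
Local Open Scope ring_scope.

Record profinite_group := ProfiniteGroup {
  pg_car :> topologicalType;
  pg_mul : pg_car -> pg_car -> pg_car;
  pg_inv : pg_car -> pg_car;
  pg_one : pg_car;
  pg_mulA : associative pg_mul;
  pg_mul1g : left_id pg_one pg_mul;
  pg_mulVg : forall x, pg_mul (pg_inv x) x = pg_one;
  pg_mul_cont : continuous (fun xy : pg_car * pg_car => pg_mul xy.1 xy.2);
  pg_inv_cont : continuous pg_inv;
  pg_hausdorff : hausdorff_space pg_car;
  pg_compact : compact [set: pg_car];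
  pg_tdisc : totally_disconnected [set: pg_car]
}.

Definition is_subgroup (G : profinite_group) (H : set G) : Prop :=
  H (pg_one G) /\
  (forall x y, H x -> H y -> H (pg_mul x (pg_inv y))).

Definition unitri (p n : nat) (M : 'M['F_p]_(n.+1)) : Prop :=
  forall i j : 'I_n.+1, (j <= i)%N -> M i j = (if i == j then 1 else 0).

(* Elements of the quotient of U_{n+1}(F_p) by the central subgroup of
   the (1,n+1) entry are represented by unitriangular matrices, two
   representatives being equal iff they agree off the corner (1,n+1)
   (0-indexed: (0,n)).  [trunc M] is the canonical representative
   (corner set to 0), i.e. the image of M in the quotient. *)
Definition trunc (p n : nat) (M : 'M['F_p]_(n.+1)) : 'M['F_p]_(n.+1) :=
  \matrix_(i, j) (if ((i : nat) == 0%N) && ((j : nat) == n) then 0 else M i j).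

(* f : H -> X is continuous for the subspace topology on H and the
   discrete topology on X, i.e. locally constant on H. *)
Definition loc_const_on (G : profinite_group) (H : set G) (X : Type)
    (f : G -> X) : Prop :=
  forall x, H x -> exists O : set G, [/\ open O, O x &
     forall y, H y -> O y -> f y = f x].

Definition cont_hom_U (p n : nat) (G : profinite_group) (H : set G)
    (psi : G -> 'M['F_p]_(n.+1)) : Prop :=
  [/\ forall x, H x -> unitri (psi x),
      forall x y, H x -> H y -> psi (pg_mul x y) = psi x *m psi y &
      loc_const_on H psi].

(* continuous homomorphism H -> U_{n+1}(F_p)/Z, given through a choice of
   representatives phi x of the cosets *)
Definition cont_hom_Ubar (p n : nat) (G : profinite_group) (H : set G)
    (phi : G -> 'M['F_p]_(n.+1)) : Prop :=
  [/\ forall x, H x -> unitri (phi x),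
      forall x y, H x -> H y ->
        trunc (phi (pg_mul x y)) = trunc (phi x *m phi y) &
      loc_const_on H (fun x => trunc (phi x))].

Definition massey_vanishing (p n : nat) (G : profinite_group) (H : set G)
    : Prop :=
  forall phi : G -> 'M['F_p]_(n.+1), cont_hom_Ubar H phi ->
  exists psi : G -> 'M['F_p]_(n.+1), cont_hom_U H psi /\
    (forall x, H x -> forall i : 'I_n,
       psi x (inord i) (inord i.+1) = phi x (inord i) (inord i.+1)).

(* Main.v *)
Require Import Defs.
From mathcomp Require Import all_boot all_order all_algebra.
From mathcomp Require Import all_classical topology.
Set Implicit Arguments. Unset Strict Implicit. Unset Printing Implicit Defensive.
Local Open Scope classical_set_scope.
Section Grp.
Context (G : profinite_group).
Local Notation "x ** y" := (pg_mul x y) (at level 40, left associativity).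
Local Notation "x ^-1" := (pg_inv x).
Local Notation one := (pg_one G).

Lemma mulgV' (x : G) : x ** x^-1 = one.
Proof.
rewrite -[x ** _]pg_mul1g -{1}(pg_mulVg (x^-1)).
by rewrite -pg_mulA (pg_mulA (x^-1) x) pg_mulVg pg_mul1g pg_mulVg.
Qed.
Lemma mulg1' (x : G) : x ** one = x.
Proof. by rewrite -(pg_mulVg x) pg_mulA mulgV' pg_mul1g. Qed.
Lemma invK' (x : G) : (x^-1)^-1 = x.
Proof. by rewrite -[LHS]mulg1' -(pg_mulVg x) pg_mulA pg_mulVg pg_mul1g. Qed.
Lemma invM' (x y : G) : (x ** y)^-1 = y^-1 ** x^-1.
Proof.
have e : (x ** y) ** (y^-1 ** x^-1) = one.
  by rewrite pg_mulA -(pg_mulA x) mulgV' mulg1' mulgV'.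
by rewrite -[LHS]mulg1' -e pg_mulA pg_mulVg pg_mul1g.
Qed.
Lemma inv1' : one^-1 = one :> G.
Proof. by rewrite -[LHS]pg_mul1g mulgV'. Qed.

Lemma cont_lmul (a : G) : continuous (fun y : G => a ** y).
Proof.
move=> y; apply: (@continuous2_cvg _ _ _ _ _ _ (fun x => a) id (@pg_mul G) a y).
- exact: (@pg_mul_cont G (a, y)).
- exact: cvg_cst.
- exact: cvg_id.
Qed.

Lemma cont_conj : continuous (fun hg : G * G => (hg.1^-1 ** hg.2) ** hg.1).
Proof.
move=> [h g]; apply: (@continuous2_cvg _ _ _ _ _ _ (fun hg : G * G => hg.1^-1 ** hg.2) fst (@pg_mul G)).
- exact: (@pg_mul_cont G (_, _)).
- apply: (@continuous2_cvg _ _ _ _ _ _ (fun hg : G * G => hg.1^-1) snd (@pg_mul G)).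
  + exact: (@pg_mul_cont G (_, _)).
  + apply: (@cvg_comp _ _ _ fst); first exact: cvg_fst.
    exact: pg_inv_cont.
  + exact: cvg_snd.
- exact: cvg_fst.
Qed.
End Grp.
Lemma open_forall (T : topologicalType) (A O : set T) (f : T * T -> T) :
  compact A -> open O -> continuous f ->
  open [set g | forall a, A a -> O (f (a, g))].
Proof.
move=> cA oO cf; rewrite openE => g Hg.
have /compact_near_coveringP nc := cA.
have := nc T (nbhs g) (fun i x => O (f (x, i))) _.
move=> H; apply: H.
move=> x Ax.
have := cf (x, g) O.
move=> /(_ (open_nbhs_nbhs _)) H.
have {}H := H (conj oO (Hg x Ax)).
rewrite /prop_near2 /=.
case: H => -[P Q] /= [HP HQ] PQ; exists (P, Q) => //= -[a b] /PQ.
by [].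
Qed.
Section ZD.
Context (T : topologicalType) (hT : hausdorff_space T) (cT : compact [set: T]).

Definition qcomp (x : T) := \bigcap_(C in [set C : set T | clopen C /\ C x]) C.

Lemma qcomp_sep (x : T) (A1 A2 : set T) : closed A1 -> closed A2 ->
  (forall z, A1 z -> A2 z -> False) -> qcomp x `<=` A1 `|` A2 -> A1 x ->
  forall z, qcomp x z -> A2 z -> False.
Proof.
move=> cA1 cA2 dA QA A1x.
have nT := compact_normal hT cT.
have [S snS clS] : filter_from (set_nbhs A1) closure (~` A2).
  apply: (nT A1 cA1); apply: (proj2 (set_nbhsP _ _)); exists (~` A2); split => //.
  - exact: closed_openC.
have [U [oU A1U US]] := proj1 (set_nbhsP _ _) snS.
pose V := ~` closure S.
have oV : open V by apply: closed_openC; exact: closed_closure.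
have A2V : A2 `<=` V by move=> z A2z /clS; apply.
have UV : forall z, U z -> V z -> False.
  by move=> z /US Sz; apply; apply: subset_closure.
pose K := ~` (U `|` V).
have cK : compact K.
  apply: (subclosed_compact _ cT) => //; apply: open_closedC; exact: openU.
have [[C [[oC cC] Cx CK]]|noC] := pselect (exists C : set T, [/\ clopen C, C x &
    forall z, C z -> K z -> False]).
  pose E := C `&` U.
  have clE : clopen E.
    split; first exact: openI.
    have -> : E = C `&` ~` V.
      apply/seteqP; split => z [Cz Hz]; split => //.
      - by move=> Vz; exact: (UV z).
      - apply: contrapT => nU; apply: (CK z Cz); case => //.
    by apply: closedI => //; exact: open_closedC.
  move=> z Qz A2z; have Ez : E z by apply: Qz; split => //; split => //; exact: A1U.
  by apply: (UV z); [case: Ez|exact: A2V].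
exfalso.
pose F := filter_from [set C : set T | clopen C /\ C x] (fun C => C `&` K).
have FF : Filter F.
  apply: filter_from_filter; first by exists setT; split => //; exact: clopenT.
  move=> C1 C2 [cl1 x1] [cl2 x2]; exists (C1 `&` C2); first by split; [exact: clopenI|].
  by move=> z [[? ?] ?]; split; split.
have PF : ProperFilter F.
  apply: filter_from_proper => // C [clC Cx]; apply: contrapT => nC.
  apply: noC; exists C; split => // z Cz Kz; apply: nC; by exists z.
have FK : F K by exists setT; [split => //; exact: clopenT| by move=> z []].
have [z [Kz clz]] := cK F PF FK.
have Qz : qcomp x z.
  move=> C [[oC cC] Cx]; apply: contrapT => nCz.
  have : F C by exists C => //; move=> w [].
  have nb : nbhs z (~` C) by apply: open_nbhs_nbhs; split => //; exact: closed_openC.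
  by move=> FC; have [w [Cw nCw]] := clz C (~` C) FC nb.
by apply: Kz; case: (QA z Qz) => [/A1U|/A2V]; [left|right].
Qed.

Lemma qcomp_connected (x : T) : connected (qcomp x).
Proof.
have cQ : closed (qcomp x) by apply: closed_bigI => C [[]].
have Qx : qcomp x x by move=> C [].
move=> B [b Bb] [O oO BO] [D cD BD].
have [Bx|nBx] := pselect (B x).
  have := @qcomp_sep x (qcomp x `&` D) (qcomp x `&` ~` O) (closedI cQ cD)
    (closedI cQ (open_closedC oO)).
  move=> /(_ _ _ _) H.
  apply/seteqP; split; first by rewrite BO => z [].
  move=> z Qz; apply: contrapT => nBz.
  apply: (H _ _ _ z Qz).
  - by move=> w Hw [_ nOw]; move: Hw; rewrite -BD BO => -[].
  - move=> w Qw; have [Ow|nOw] := pselect (O w); [left|right] => //.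
    by rewrite -BD BO.
  - by rewrite -BD.
  - by split => // Oz; apply: nBz; rewrite BO.
exfalso.
have := @qcomp_sep x (qcomp x `&` ~` O) (qcomp x `&` D) 
    (closedI cQ (open_closedC oO)) (closedI cQ cD).
move=> /(_ _ _ _) H.
apply: (H _ _ _ b).
- by move=> w [_ nOw] Hw; move: Hw; rewrite -BD BO => -[].
- move=> w Qw; have [Ow|nOw] := pselect (O w); [right|left] => //.
  by rewrite -BD BO.
- by split => // Ox; apply: nBx; rewrite BO.
- by move: Bb; rewrite BO => -[].
- by rewrite -BD.
Qed.

Lemma compact_td_zd : totally_disconnected [set: T] -> zero_dimensional T.
Proof.
move=> td x y xy; apply: contrapT => nsep.
have Qy : qcomp x y.
  move=> C [clC Cx]; apply: contrapT => nCy; apply: nsep; by exists C.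
have Qx : qcomp x x by move=> C [].
have := @connected_component_max _ [set: T] (qcomp x) x Qx (fun _ _ => I) (@qcomp_connected x) y Qy.
rewrite td //= => yx; move: xy; by rewrite -yx eqxx.
Qed.
End ZD.
Section Tr.
Import GRing.Theory.
Local Open Scope ring_scope.
Lemma trunc_mul (p n : nat) (A B : 'M['F_p]_(n.+1)) : unitri A -> unitri B ->
  trunc (A *m B) = trunc (trunc A *m trunc B).
Proof.
move=> uA uB; apply/matrixP => i j; rewrite !mxE.
case: ifP => // Hij; apply: eq_bigr => k _; rewrite /trunc !mxE.
case E1: (((i : nat) == 0%N) && ((k : nat) == n)).
  case/andP: E1 => /eqP i0 /eqP kn.
  have jn : (j : nat) != n by apply/negP => /eqP jn; move: Hij; rewrite i0 jn !eqxx.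
  have jk : (j <= k)%N by rewrite kn -ltnS ltn_ord.
  rewrite (uB k j jk).
  have -> : (k == j) = false by apply/negP => /eqP kj; move: jn; rewrite -kj kn eqxx.
  by rewrite mulr0 mul0r.
case E2: (((k : nat) == 0%N) && ((j : nat) == n)).
  case/andP: E2 => /eqP k0 /eqP jn.
  have i0 : (i : nat) != 0%N by apply/negP => /eqP i0; move: Hij; rewrite i0 jn !eqxx.
  have ki : (k <= i)%N by rewrite k0.
  rewrite (uA i k ki).
  have -> : (i == k) = false by apply/negP => /eqP ik; move: i0; rewrite ik k0 eqxx.
  by rewrite mul0r mulr0.
by [].
Qed.
End Tr.
Section Main.
Context (G : profinite_group).
Local Notation "x ** y" := (pg_mul x y) (at level 40, left associativity).
Local Notation "x ^-1" := (pg_inv x).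
Local Notation one := (pg_one G).

Lemma mulgKV' (x y : G) : x ** y^-1 ** y = x.
Proof. by rewrite -pg_mulA pg_mulVg mulg1'. Qed.
Lemma mulgK' (x y : G) : x ** y ** y^-1 = x.
Proof. by rewrite -pg_mulA mulgV' mulg1'. Qed.
Lemma mulVKg' (x y : G) : x^-1 ** (x ** y) = y.
Proof. by rewrite pg_mulA pg_mulVg pg_mul1g. Qed.
Lemma mulKVg' (x y : G) : x ** (x^-1 ** y) = y.
Proof. by rewrite pg_mulA mulgV' pg_mul1g. Qed.

Lemma sg1 (H : set G) : is_subgroup H -> H one.
Proof. by case. Qed.
Lemma sgV (H : set G) x : is_subgroup H -> H x -> H (x^-1).
Proof. by move=> [H1 HM] Hx; have := HM _ _ H1 Hx; rewrite pg_mul1g. Qed.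
Lemma sgM (H : set G) x y : is_subgroup H -> H x -> H y -> H (x ** y).
Proof.
move=> sH Hx Hy; have := (proj2 sH) _ _ Hx (sgV sH Hy); by rewrite invK'.
Qed.


End Main.

Unset Implicit Arguments.
Theorem mainTheorem9 (p n : nat) (G : profinite_group) :
  prime p -> (2 <= n)%N ->
  (forall H : set G, is_subgroup H -> open H -> massey_vanishing p n H) ->
  forall H : set G, is_subgroup H -> closed H -> massey_vanishing p n H.
Proof.
move=> pp n2 hyp H sH cH phi [phU phM phL].
pose tau x := trunc (phi x).
have H1 := sg1 sH.
have tauK : forall h k, H h -> H k -> tau k = tau (pg_one G) ->
    tau (pg_mul h k) = tau h.
  move=> h k Hh Hk e; rewrite /tau phM // trunc_mul; try exact: phU.
  rewrite [trunc (phi k)]e /tau -trunc_mul; try exact: phU.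
  by rewrite -phM // mulg1'.
have [O [oO O1 OK]] := phL _ H1.
have zdG := compact_td_zd (@pg_hausdorff G) (@pg_compact G) (@pg_tdisc G).
have nO : nbhs (pg_one G) O by apply: open_nbhs_nbhs; split.
have [C [C1 [oC cC]] CO] := zero_dimensional_cvg (@pg_hausdorff G) zdG (@pg_compact G) nO.
have cCc : compact C := subclosed_compact cC (@pg_compact G) (fun _ _ => I).
pose V1 := [set g : G | forall c, C c -> C (pg_mul c g)].
have oV1 : open V1 := open_forall cCc oC (@pg_mul_cont G).
pose V := V1 `&` (@pg_inv G @^-1` V1).
have oV : open V.
  apply: openI => //; move: (@pg_inv_cont G) => /continuousP; exact.
have sV : is_subgroup V.
  split.
  - split => c Cc /=; [by rewrite mulg1' | by rewrite inv1' mulg1'].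
  - move=> x y [Vx1 Vx2] [Vy1 Vy2]; split => c Cc /=.
    + by rewrite pg_mulA; apply: Vy2; apply: Vx1.
    + by rewrite invM' invK' pg_mulA; apply: Vx2; apply: Vy1.
have VC : V `<=` C by move=> g [Vg _]; have := Vg _ C1; rewrite pg_mul1g.
pose W := [set g : G | forall h, H h -> V (pg_mul (pg_mul (pg_inv h) g) h)].
have cHc : compact H := subclosed_compact cH (@pg_compact G) (fun _ _ => I).
have oW : open W := open_forall cHc oV (@cont_conj G).
have WV : W `<=` V by move=> g /(_ _ H1); rewrite inv1' pg_mul1g mulg1'.
have sW : is_subgroup W.
  split.
  - by move=> h Hh; rewrite mulg1' pg_mulVg; exact: sg1 sV.
  - move=> x y Wx Wy h Hh.
    have -> : pg_mul (pg_mul (pg_inv h) (pg_mul x (pg_inv y))) h =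
      pg_mul (pg_mul (pg_mul (pg_inv h) x) h)
             (pg_inv (pg_mul (pg_mul (pg_inv h) y) h)).
      by rewrite !invM' invK' !pg_mulA mulgK'.
    by apply: (proj2 sV); [exact: Wx | exact: Wy].
have Wconj : forall h g, H h -> W g -> W (pg_mul (pg_mul h g) (pg_inv h)).
  move=> h g Hh Wg h' Hh'.
  have := Wg (pg_mul (pg_inv h) h') (sgM sH (sgV sH Hh) Hh').
  by rewrite invM' invK' !pg_mulA.
have WO : W `<=` O by move=> g /WV /VC /CO.
pose U := [set g : G | exists h, exists v, [/\ H h, W v & g = pg_mul h v]].
have sU : is_subgroup U.
  split.
    by exists (pg_one G), (pg_one G); split => //; [exact: sg1 sW | rewrite pg_mul1g].
  move=> x y [h1 [v1 [Hh1 Wv1 ->]]] [h2 [v2 [Hh2 Wv2 ->]]].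
  exists (pg_mul h1 (pg_inv h2)), (pg_mul (pg_mul h2 (pg_mul v1 (pg_inv v2))) (pg_inv h2)).
  split.
  - exact: (proj2 sH).
  - by apply: Wconj => //; exact: (proj2 sW).
  - by rewrite invM' !pg_mulA mulgKV'.
have HU : H `<=` U.
  by move=> h Hh; exists h, (pg_one G); split => //; [exact: sg1 sW| rewrite mulg1'].
have oTr : forall h, open ((fun y => pg_mul (pg_inv h) y) @^-1` W).
  by move=> h; move: (@cont_lmul G (pg_inv h)) => /continuousP; apply.
have oU : open U.
  rewrite openE => g [h [v [Hh Wv ->]]].
  have : nbhs (pg_mul h v) ((fun y => pg_mul (pg_inv h) y) @^-1` W).
    by apply: open_nbhs_nbhs; split => //=; rewrite mulVKg'.
  apply: filterS => y Wy; exists h, (pg_mul (pg_inv h) y); split => //.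
  by rewrite mulKVg'.
pose sig g := if pselect (H g) then g else
  if pselect (U g) is left e then projT1 (cid e) else g.
have sigP : forall g, U g -> H (sig g) /\ W (pg_mul (pg_inv (sig g)) g).
  move=> g Ug; rewrite /sig; case: pselect => [Hg|nHg] /=.
    by split => //; rewrite pg_mulVg; exact: sg1 sW.
  case: (pselect (U g)) => [e|//] /=; case: (cid e) => h [v [Hh Wv gE]] /=.
  by split => //; rewrite gE mulVKg'.
have sigH : forall g, H g -> sig g = g by move=> g Hg; rewrite /sig; case: pselect.
have key : forall g h, U g -> H h -> W (pg_mul (pg_inv h) g) -> tau (sig g) = tau h.
  move=> g h Ug Hh Whg; have [Hs Ws] := sigP g Ug.
  have Wk : W (pg_mul (pg_inv h) (sig g)).
    have -> : pg_mul (pg_inv h) (sig g) =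
        pg_mul (pg_mul (pg_inv h) g) (pg_inv (pg_mul (pg_inv (sig g)) g)).
      by rewrite invM' invK' !pg_mulA mulgK'.
    exact: (proj2 sW).
  have Hk : H (pg_mul (pg_inv h) (sig g)) by apply: sgM sH (sgV sH Hh) Hs.
  rewrite -{1}(mulKVg' h (sig g)) tauK //.
  by apply: OK => //; exact: WO.
pose phi' g := phi (sig g).
have cU : cont_hom_Ubar U phi'.
  split.
  - by move=> x Ux; apply: phU; exact: (sigP x Ux).1.
  - move=> x y Ux Uy.
    have [Hx1 Wx] := sigP x Ux; have [Hy1 Wy] := sigP y Uy.
    rewrite /phi' -phM //; apply: key.
    + exact: sgM sU Ux Uy.
    + exact: sgM sH Hx1 Hy1.
    + have -> : pg_mul (pg_inv (pg_mul (sig x) (sig y))) (pg_mul x y) =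
         pg_mul (pg_mul (pg_mul (pg_inv (sig y)) (pg_mul (pg_inv (sig x)) x))
           (pg_inv (pg_inv (sig y)))) (pg_mul (pg_inv (sig y)) y).
        by rewrite invM' invK' !pg_mulA mulgK'.
      apply: sgM sW _ Wy; apply: Wconj => //; exact: sgV sH Hy1.
  - move=> x Ux; have [Hs Ws] := sigP x Ux.
    exists ((fun y => pg_mul (pg_inv (sig x)) y) @^-1` W); split => //.
    by move=> y Uy Wy; exact: key.
have [psi [[psU psM psL] psE]] := hyp U sU oU phi' cU.
exists psi; split.
  split.
  - by move=> x Hx; apply: psU; exact: HU.
  - by move=> x y Hx Hy; apply: psM; exact: HU.
  - move=> x Hx; have [O' [oO' O'x O'P]] := psL x (HU x Hx).
    by exists O'; split => // y Hy; exact: O'P (HU y Hy).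
move=> x Hx i; rewrite psE; last exact: HU.
by rewrite /phi' (sigH x Hx).
Qed.
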